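(* Let $(X,d_X)$ be a compact metric space, let $(\phi_j)_{j\in\mathbb{N}}$ be maps $\phi_j:X\to X$ for which there is $0<\gamma<1$ with $d_X(\phi_j(x_1),\phi_j(x_2))\le \gamma\, d_X(x_1,x_2)$ for all $j\in\mathbb{N}$ and $x_1,x_2\in X$, and let $(q_j)_{j\in\mathbb{N}}$ be real numbers with $q_j\le 0$ for all $j$ and $\sup_{j\in\mathbb{N}} q_j=0$. For $\mu\in I(X)$ and $f\in C(X,\mathbb{R})$ put $$\Lambda_\mu(f):=\lim_{n\to\infty}\ \max_{1\le j\le n} I_j(\mu)(f),\qquad I_j(\mu)(f):=q_j+\mu(f\circ\phi_j).$$ Then this limit exists for every $f\in C(X,\mathbb{R})$, $\Lambda_\mu(f)=\sup_{j\in\mathbb{N}} I_j(\mu)(f)$, and the functional $\Lambda_\mu$ belongs to $I(X)$.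
   Context: Max-plus notation: $a\oplus b=\max(a,b)$, $a\odot b=a+b$ on $\mathbb{R}\cup\{-\infty\}$. $C(X,\mathbb{R})$ is the set of continuous real functions on $X$, with $(a\odot f)(x)=a+f(x)$ and $(f\oplus g)(x)=\max(f(x),g(x))$. A functional $m:C(X,\mathbb{R})\to\mathbb{R}$ is max-plus linear if $m(a+f)=a+m(f)$ for all $a\in\mathbb{R}$, $f\in C(X,\mathbb{R})$, and $m(\max(f,g))=\max(m(f),m(g))$ for all $f,g$. $I(X)$ (idempotent probabilities) is the set of max-plus linear functionals $m$ with $m(0)=0$. *)

(* Defs.v *)
From HB Require Import structures.
From mathcomp Require Import all_boot all_order all_algebra.
From mathcomp Require Import all_classical all_reals all_analysis.
Set Implicit Arguments. Unset Strict Implicit. Unset Printing Implicit Defensive.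
Import Order.TTheory GRing.Theory Num.Theory.
Import numFieldNormedType.Exports.
Local Open Scope classical_set_scope.
Local Open Scope ring_scope.

(* A functional on C(X,R) is represented as a map (X -> R) -> R whose values
   are only constrained on continuous functions. *)

Definition maxplus_linear (R : realType) (X : topologicalType)
  (m : (X -> R) -> R) : Prop :=
  (forall (a : R) (f : X -> R), continuous f ->
      m (fun x => a + f x) = a + m f) /\
  (forall f g : X -> R, continuous f -> continuous g ->
      m (fun x => Num.max (f x) (g x)) = Num.max (m f) (m g)).

Definition idem_prob (R : realType) (X : topologicalType)
  (m : (X -> R) -> R) : Prop :=
  maxplus_linear m /\ m (fun _ => 0) = 0.

(* I_j(mu)(f) = q_j + mu (f o phi_j); indices j : nat stand for 1,2,3,... *)
Definition Ij (R : realType) (X : topologicalType) (q : nat -> R)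
  (phi : nat -> X -> X) (mu : (X -> R) -> R) (j : nat) (f : X -> R) : R :=
  q j + mu (f \o phi j).

(* max_{1 <= j <= n+1} I_j(mu)(f)  (shifted: index j : nat stands for j+1) *)
Definition Imax (R : realType) (X : topologicalType) (q : nat -> R)
  (phi : nat -> X -> X) (mu : (X -> R) -> R) (f : X -> R) (n : nat) : R :=
  \big[Num.max/Ij q phi mu 0%N f]_(j < n.+1) Ij q phi mu j f.

Definition Lambda (R : realType) (X : topologicalType) (q : nat -> R)
  (phi : nat -> X -> X) (mu : (X -> R) -> R) (f : X -> R) : R :=
  limn (Imax q phi mu f).

(* Main.v *)
Require Import Defs.
From HB Require Import structures.
From mathcomp Require Import all_boot all_order all_algebra.
From mathcomp Require Import all_classical all_reals all_analysis.
Import Order.TTheory GRing.Theory Num.Theory.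
Import numFieldNormedType.Exports.
Local Open Scope classical_set_scope.
Local Open Scope ring_scope.
Set Implicit Arguments. Unset Strict Implicit.

Lemma cont_bounded (R : realType) (X : topologicalType) (f : X -> R) :
  compact [set: X] -> continuous f -> exists M, forall x, f x <= M.
Proof.
move=> cX cf.
have cI : compact (f @` [set: X]) by apply: continuous_compact => //; exact: continuous_subspaceT.
have := compact_bounded cI.
move=> [M [_ HM]].
exists (`|M| + 1) => x.
apply: le_trans (ler_norm _) _.
have := HM (`|M| + 1) _ (f x) (imageT _ _); apply.
by apply: le_lt_trans (ler_norm M) _; rewrite ltrDl.
Qed.

Lemma lip_cont (R : realType) (X : metricType R) (g : X -> X) (gamma : R) :
  gamma < 1 -> (forall x1 x2, mdist (g x1) (g x2) <= gamma * mdist x1 x2) ->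
  continuous g.
Proof.
move=> g1 Hg x; apply/cvg_ballP => e e0.
apply/nbhs_ballP; exists e => //= y; rewrite !ballEmdist /= => hy.
apply: le_lt_trans (Hg _ _) _.
apply: le_lt_trans hy.
by rewrite ler_piMl // ?mdist_ge0 // ltW.
Qed.
Lemma mu_cst (R : realType) (X : topologicalType) (mu : (X -> R) -> R) c :
  idem_prob mu -> mu (fun _ => c) = c.
Proof.
move=> [[H1 _] H0].
have -> : (fun _ : X => c) = (fun x => c + (fun _ => 0) x) by apply/funext=> x; rewrite addr0.
by rewrite H1 ?H0 ?addr0 //; exact: cst_continuous.
Qed.

Lemma mu_mono (R : realType) (X : topologicalType) (mu : (X -> R) -> R) f g :
  idem_prob mu -> continuous f -> continuous g -> (forall x, f x <= g x) -> mu f <= mu g.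
Proof.
move=> [[_ H2] _] cf cg fg.
have E : (fun x => Num.max (f x) (g x)) = g by apply/funext=> x; rewrite max_r.
have := H2 f g cf cg; rewrite E => ->.
by rewrite le_max lexx.
Qed.

Lemma sup_addl (R : realType) (u : nat -> R) a : has_ubound (range u) ->
  sup (range (fun j => a + u j)) = a + sup (range u).
Proof.
move=> hu; apply/le_anti/andP; split.
  apply: ge_sup; first by exists (a + u 0%N), 0%N.
  move=> _ [j _ <-]; rewrite lerD2l; apply: ub_le_sup => //; by exists j.
have hau : has_ubound (range (fun j => a + u j)).
  case: hu => M HM; exists (a + M) => _ [j _ <-]; rewrite lerD2l; apply: HM; by exists j.
rewrite addrC -lerBrDr; apply: ge_sup; first by exists (u 0%N), 0%N.
move=> _ [j _ <-]; rewrite lerBrDr addrC; apply: ub_le_sup => //; by exists j.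
Qed.

Lemma sup_max (R : realType) (u v : nat -> R) : has_ubound (range u) -> has_ubound (range v) ->
  sup (range (fun j => Num.max (u j) (v j))) = Num.max (sup (range u)) (sup (range v)).
Proof.
move=> hu hv.
have huv : has_ubound (range (fun j => Num.max (u j) (v j))).
  case: hu => M HM; case: hv => N HN; exists (Num.max M N) => _ [j _ <-].
  rewrite ge_max !le_max.
  have -> : u j <= M by apply: HM; exists j.
  have -> : v j <= N by apply: HN; exists j.
  by rewrite orbT.
apply/le_anti/andP; split.
  apply: ge_sup; first by exists (Num.max (u 0%N) (v 0%N)), 0%N.
  move=> _ [j _ <-]; rewrite ge_max !le_max.
  have -> : u j <= sup (range u) by apply: ub_le_sup => //; exists j.
  have -> : v j <= sup (range v) by apply: ub_le_sup => //; exists j.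
  by rewrite orbT.
rewrite ge_max; apply/andP; split; apply: ge_sup.
- by exists (u 0%N), 0%N.
- move=> _ [j _ <-]; apply: le_trans (ub_le_sup huv _); last by exists j.
  by rewrite le_max lexx.
- by exists (v 0%N), 0%N.
- move=> _ [j _ <-]; apply: le_trans (ub_le_sup huv _); last by exists j.
  by rewrite le_max lexx orbT.
Qed.

Lemma Imax_ge (R : realType) (X : topologicalType) q phi (mu : (X -> R) -> R) f n j :
  (j <= n)%N -> Ij q phi mu j f <= Imax q phi mu f n.
Proof.
rewrite -ltnS => hj; rewrite /Imax.
exact: (le_bigmax _ (fun i : 'I_n.+1 => Ij q phi mu i f) (Ordinal hj)).
Qed.

Lemma Imax_le (R : realType) (X : topologicalType) q phi (mu : (X -> R) -> R) f n M :
  (forall j, Ij q phi mu j f <= M) -> Imax q phi mu f n <= M.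
Proof. by move=> H; rewrite /Imax; apply: bigmax_le. Qed.

Lemma Imax_S (R : realType) (X : topologicalType) q phi (mu : (X -> R) -> R) f n :
  Imax q phi mu f n <= Imax q phi mu f n.+1.
Proof. rewrite /Imax; exact: (le_bigmax_ord (x0:=Ij q phi mu 0 f) (n:=n.+1) (m:=n.+2) xpredT (fun i => Ij q phi mu i f) (leqnSn _)). Qed.

Unset Implicit Arguments. Set Strict Implicit.

Theorem lemma2p7 (R : realType) (X : metricType R)
  (phi : nat -> X -> X) (gamma : R) (q : nat -> R) (mu : (X -> R) -> R) :
  compact [set: X] ->
  0 < gamma -> gamma < 1 ->
  (forall (j : nat) (x1 x2 : X),
      mdist (phi j x1) (phi j x2) <= gamma * mdist x1 x2) ->
  (forall j : nat, q j <= 0) ->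
  sup (range q) = 0 ->
  idem_prob mu ->
  (forall f : X -> R, continuous f ->
     cvgn (Imax q phi mu f) /\
     Lambda q phi mu f = sup (range (fun j => Ij q phi mu j f))) /\
  idem_prob (Lambda q phi mu).
Proof.
move=> cX g0 g1 Hphi q0 supq mup.
have cphi j : continuous (phi j) := lip_cont g1 (Hphi j).
have cfc j (f : X -> R) : continuous f -> continuous (f \o phi j).
  by move=> cf x; exact: (continuous_comp (cphi j x) (cf (phi j x))).
have key : forall f, continuous f ->
    has_ubound (range (fun j => Ij q phi mu j f)) /\ cvgn (Imax q phi mu f) /\
    Lambda q phi mu f = sup (range (fun j => Ij q phi mu j f)).
  move=> f cf; have [M HM] := cont_bounded cX cf.
  have hb j : Ij q phi mu j f <= M.
    rewrite /Ij -[M]add0r; apply: lerD => //.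
    rewrite -(mu_cst M mup); apply: mu_mono => //; [exact: cfc | exact: cst_continuous | move=> x; exact: HM].
  have hub : has_ubound (range (fun j => Ij q phi mu j f)).
    by exists M => _ [k _ <-].
  have hI : has_ubound (range (Imax q phi mu f)).
    by exists M => _ [n _ <-]; apply: Imax_le.
  have nd : nondecreasing_seq (Imax q phi mu f).
    by apply/nondecreasing_seqP => n; exact: Imax_S.
  have cv := nondecreasing_cvgn nd hI.
  have E : sup (range (Imax q phi mu f)) = sup (range (fun j => Ij q phi mu j f)).
    apply/le_anti/andP; split.
      apply: ge_sup; first by exists (Imax q phi mu f 0%N), 0%N.
      move=> _ [n _ <-]; apply: Imax_le => j; apply: ub_le_sup => //; by exists j.
    apply: ge_sup; first by exists (Ij q phi mu 0%N f), 0%N.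
    move=> _ [j _ <-]; apply: le_trans (Imax_ge _ _ _ _ (leqnn j)) _.
    apply: ub_le_sup => //; by exists j.
  split => //; split; first by apply/cvg_ex; exists (sup (range (Imax q phi mu f))).
  by rewrite /Lambda (cvg_lim _ cv) ?E.
split; first by move=> f cf; have [_ [? ?]] := key f cf.
have [[H1 H2] H0] := mup.
split; [split|].
- move=> a f cf.
  have cf' : continuous (fun x => a + f x).
    by move=> x; apply: cvgD; [exact: cvg_cst | exact: cf].
  have E : (fun j => Ij q phi mu j (fun x => a + f x)) = (fun j => a + Ij q phi mu j f).
    apply/funext => j; rewrite /Ij.
    have -> : (fun x => a + f x) \o phi j = (fun x => a + (f \o phi j) x) by [].
    by rewrite H1; [rewrite addrCA | exact: cfc].
  rewrite (key _ cf').2.2 (key _ cf).2.2 E sup_addl //; exact: (key _ cf).1.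
- move=> f g cf cg.
  have cfg : continuous (fun x => Num.max (f x) (g x)).
    by move=> x; apply: (continuous_max (f:=f) (g:=g)); [exact: cf | exact: cg].
  have E : (fun j => Ij q phi mu j (fun x => Num.max (f x) (g x))) =
     (fun j => Num.max (Ij q phi mu j f) (Ij q phi mu j g)).
    apply/funext => j; rewrite /Ij.
    have -> : (fun x => Num.max (f x) (g x)) \o phi j = (fun x => Num.max ((f \o phi j) x) ((g \o phi j) x)) by [].
    by rewrite H2; [rewrite addr_maxr | exact: cfc | exact: cfc].
  rewrite (key _ cfg).2.2 (key _ cf).2.2 (key _ cg).2.2 E sup_max //.
    exact: (key _ cf).1.
  exact: (key _ cg).1.
- have E : (fun j => Ij q phi mu j (fun _ => 0)) = q.
    apply/funext => j; rewrite /Ij.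
    have -> : (fun _ : X => 0 : R) \o phi j = (fun _ => 0) by [].
    by rewrite H0 addr0.
  by rewrite (key _ (@cst_continuous _ _ (0 : R))).2.2 E supq.
Qed.
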